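(* Let $D$ be a Dyck path of semilength $n$ with column-area sequence $(c_1,\dots,c_{n+1})$, let $\mathcal D=\{k\in\{1,\dots,n\}: c_{k+1}=c_k-1\}$, and let $\pi$ be the permutation associated with $D$ by the Billey–Jockusch–Stanley bijection. Then $k\in\mathcal D$ if and only if $\pi(k)\le k$ (i.e. $k$ is a fixpoint or a deficiency of $\pi$).
   Context: Work in an $n\times n$ array of unit cells; the cell $(i,j)$ is the one in column $i$ (columns numbered $1,\dots,n$ from left to right) and row $j$ (rows numbered $1,\dots,n$ from bottom to top), i.e. the square $[i-1,i]\times[j-1,j]$. A Dyck path of semilength $n$ is a lattice path from $(0,0)$ to $(n,n)$ with unit north and east steps that never goes below the line $y=x$. Column-area sequence: for $1\le k\le n$, $c_k$ is the number of full cells in column $k$ strictly between the $k$-th east step of $D$ and the diagonal; equivalently, if the $k$-th east step lies at height $y_k$, then $c_k=y_k-k$; and $c_{n+1}=-1$. A valley of $D$ is an east step immediately followed by a north step; if the east step is the $k$-th east step and the north step is the $\ell$-th north step, the valley is at position $(k,\ell)$, the cell enclosed by these two steps. Billey–Jockusch–Stanley bijection: put a cross in every valley cell of $D$; then, for the columns $i=1,2,\dots,n$ in this order, if column $i$ does not yet contain a cross, put a cross in the lowest cell of column $i$ whose row does not yet contain a cross. The crosses form a permutation matrix, and $\pi(i)$ is the row of the cross in column $i$. An index $k$ is a fixpoint of $\pi$ if $\pi(k)=k$ and a deficiency if $\pi(k)<k$. *)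

(* Defs.v *)
From mathcomp Require Import all_boot all_order all_algebra.
Set Implicit Arguments. Unset Strict Implicit. Unset Printing Implicit Defensive.
Import GRing.Theory Num.Theory.

(* A lattice path is a word over bool: true = North step, false = East step. *)

Definition dyck (n : nat) (w : seq bool) : Prop :=
  [/\ size w = (2 * n)%N, count id w = n &
      forall i, i <= size w -> count negb (take i w) <= count id (take i w)].

Fixpoint east_heights (h : nat) (w : seq bool) : seq nat :=
  match w with
  | [::] => [::]
  | b :: w' => if b then east_heights h.+1 w' else h :: east_heights h w'
  end.

Definition east_height (w : seq bool) (k : nat) : nat :=
  nth 0 (east_heights 0 w) k.-1.

Definition col_area (n : nat) (w : seq bool) (k : nat) : int :=
  if k <= n then (Posz (east_height w k) - Posz k)%R else (-1)%R.

(* Valleys: an east step (the k-th) immediately followed by a north step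
   (the l-th) gives the valley cell (k, l) = (column, row).
   e = number of east steps so far, nn = number of north steps so far. *)
Fixpoint valleys (e nn : nat) (w : seq bool) : seq (nat * nat) :=
  match w with
  | [::] => [::]
  | b :: w' =>
      if b then valleys e nn.+1 w'
      else if w' is true :: _ then (e.+1, nn.+1) :: valleys e.+1 nn w'
           else valleys e.+1 nn w'
  end.

Definition bjs_step (n : nat) (cr : seq (nat * nat)) (i : nat) : seq (nat * nat) :=
  if has (fun p => p.1 == i) cr then cr
  else match ohead [seq r <- iota 1 n | all (fun p => p.2 != r) cr] with
       | Some r => rcons cr (i, r)
       | None => cr
       end.

Definition bjs_crosses (n : nat) (w : seq bool) : seq (nat * nat) :=
  foldl (bjs_step n) (valleys 0 0 w) (iota 1 n).

Definition bjs_perm (n : nat) (w : seq bool) (i : nat) : nat :=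
  let cr := bjs_crosses n w in (nth (0, 0) cr (find (fun p => p.1 == i) cr)).2.

(* Main.v *)
Require Import Defs.
From mathcomp Require Import all_boot all_order all_algebra zify.
Import GRing.Theory Num.Theory.

Lemma size_eh h w : size (east_heights h w) = count negb w.
Proof. by elim: w h => [|[] w IH] h //=; rewrite IH. Qed.

Lemma eh_ge h w x : x \in east_heights h w -> h <= x.
Proof.
elim: w h => [|[] w IH] h //=.
- by move=> /IH; lia.
- by rewrite inE => /orP [/eqP -> //| /IH].
Qed.

Lemma eh_prefix h w j : j < size (east_heights h w) ->
  exists i, [/\ i < size w, count negb (take i.+1 w) = j.+1 &
     nth 0 (east_heights h w) j = h + count id (take i.+1 w)].
Proof.
elim: w h j => [|[] w IH] h j //=.
- move=> /IH [i [H1 H2 H3]]; exists i.+1; split => //=; rewrite H3; lia.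
- case: j => [|j] /=.
  + by move=> _; exists 0; rewrite take0 /=; split => //; lia.
  + move=> /IH [i [H1 H2 H3]]; exists i.+1; split => //=; lia.
Qed.

Lemma head_eh h w :
  (nth (h + count id w) (east_heights h w) 0 != h) = (head false w).
Proof.
case: w => [|[] w] /=; first by rewrite addn0 eqxx.
- case E: (east_heights h.+1 w) => [|x t] /=.
  + lia.
  + have : x \in east_heights h.+1 w by rewrite E inE eqxx.
    move/eh_ge; lia.
- by rewrite eqxx.
Qed.

Lemma valleys_mem e h w p : p \in valleys e h w <->
  exists j, [/\ j < size (east_heights h w),
     p = (e + j.+1, (nth 0 (east_heights h w) j).+1) &
     nth (h + count id w) (east_heights h w) j.+1 != nth 0 (east_heights h w) j].
Proof.
elim: w e h p => [|b w IH] e h p /=.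
- by split => // [[j [] ]].
case: b => /=.
- have -> : h + (true + count id w) = h.+1 + count id w by rewrite /= addnS addSn.
  exact: IH.
- have key : (p \in valleys e.+1 h w) <-> exists j, [/\ j.+1 < (size (east_heights h w)).+1,
     p = (e + j.+2, (nth 0 (east_heights h w) j).+1) &
     nth (h + count id w) (east_heights h w) j.+1 != nth 0 (east_heights h w) j].
    rewrite IH; split => [] [j [H1 H2 H3]]; exists j; split => //; by rewrite H2 addSnnS.
  have hd := head_eh h w.
  split.
  + move=> Hp.
    have Hp' : head false w /\ p = (e.+1, h.+1) \/ p \in valleys e.+1 h w.
      case: w Hp {IH key hd} => [|[] w] //=; last by right.
      rewrite inE => /orP [/eqP ->|]; by auto.
    case: Hp' => [[Hw ->]|/key [j [H1 H2 H3]]].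
    * exists 0; split => //; first by rewrite addn1.
      by rewrite hd.
    * by exists j.+1.
  + case=> [[|j] [H1 H2 H3]].
    * rewrite /= hd in H3; rewrite /= in H2; clear H1; case: w H3 {IH key hd} => [|[] w] // _.
      by rewrite inE H2 addn1 eqxx.
    * have : p \in valleys e.+1 h w by apply/key; exists j.
      clear H1 H2 H3; case: w {IH key hd} => [|[] w] //= Hv.
      by rewrite inE Hv orbT.
Qed.

Lemma valleys_cols e h w :
  all (fun p => e < p.1) (valleys e h w) && uniq (map fst (valleys e h w)).
Proof.
elim: w e h => [|[] w IH] e h //=.
have /andP [A U] := IH e.+1 h.
have A' : all (fun p => e < p.1) (valleys e.+1 h w).
  by apply/allP => p /(allP A); lia.
case: w {IH} A U A' => [|[] w] //= A U A'.
rewrite ltnSn A' /= U andbT.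
apply/mapP => [[p Hp E]].
by move: (allP A p Hp) => /=; rewrite -E ltnn.
by rewrite A' U.
Qed.

Lemma step_ext n cr i : exists s, bjs_step n cr i = cr ++ s.
Proof.
rewrite /bjs_step; case: ifP => _; first by exists [::]; rewrite cats0.
case: ohead => [r|]; first by exists [:: (i, r)]; rewrite cats1.
by exists [::]; rewrite cats0.
Qed.

Lemma fold_ext n cr l : exists s, foldl (bjs_step n) cr l = cr ++ s.
Proof.
elim: l cr => [|i l IH] cr /=; first by exists [::]; rewrite cats0.
have [s1 ->] := step_ext n cr i.
have [s2 ->] := IH (cr ++ s1).
by exists (s1 ++ s2); rewrite catA.
Qed.

Lemma fold_inv n V i : uniq (map fst V) ->
  exists F, [/\ foldl (bjs_step n) V (iota 1 i) = V ++ F,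
     all (fun p => 0 < p.1 <= i) F & uniq (map fst (V ++ F))].
Proof.
move=> UV; elim: i => [|i [F [E A U]]]; first by exists [::]; rewrite cats0.
have -> : iota 1 i.+1 = iota 1 i ++ [:: i.+1] by rewrite -(addn1 i) iotaD add1n addn1.
rewrite foldl_cat E /= /bjs_step.
have A' : all (fun p => 0 < p.1 <= i.+1) F.
  by apply/allP => p /(allP A); lia.
case: ifP => Hh; first by exists F.
case: ohead => [r|]; last by exists F.
exists (rcons F (i.+1, r)); rewrite -rcons_cat; split => //.
- by rewrite all_rcons /= A' andbT; lia.
- rewrite map_rcons rcons_uniq U andbT.
  apply/mapP => [[p Hp E']]; move/negP: Hh; apply.
  by apply/hasP; exists p => //; rewrite -E'.
Qed.

Lemma find_cat_has (T : eqType) (a : pred T) (x0 : T) Q s : has a Q ->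
  nth x0 (Q ++ s) (find a (Q ++ s)) = nth x0 Q (find a Q).
Proof.
move=> H; rewrite find_cat H nth_cat.
by rewrite -has_find H.
Qed.

Theorem mainTheorem3 (n : nat) (w : seq bool) :
  dyck n w ->
  forall k : nat, 1 <= k <= n ->
    (col_area n w k.+1 = (col_area n w k - 1)%R <-> bjs_perm n w k <= k).
Proof.
move=> [Hsz Hcnt Hpre] k /andP [k1 kn].
set H := east_heights 0 w.
have sH : size H = n.
  rewrite /H size_eh; have := count_predC id w; rewrite Hsz Hcnt.
  have -> : count (predC id) w = count negb w by [].
  lia.
have low : forall j, j < n -> j.+1 <= nth 0 H j.
  move=> j jn; have [i [Hi Hneg Hnth]] := @eh_prefix 0 w j (ltac:(by rewrite -/H sH)).
  rewrite -/H in Hnth; rewrite Hnth add0n -Hneg; apply: Hpre; lia.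
have cond : (col_area n w k.+1 = col_area n w k - 1)%R <-> nth n H k = nth 0 H k.-1.
  rewrite /col_area /east_height -/H kn /=.
  case: (ltnP k n) => kn'.
  - rewrite (set_nth_default n 0) ?sH //; lia.
  - rewrite (nth_default n (_ : size H <= k)) ?sH //; lia.
rewrite cond {cond}.
set V := valleys 0 0 w.
have VP : forall p, p \in V -> exists j, [/\ j < n, p = (j.+1, (nth 0 H j).+1) & nth n H j.+1 != nth 0 H j].
  move=> p /valleys_mem [j [jn pe ne]]; exists j; split.
  - by rewrite -sH.
  - by rewrite pe add0n.
  - by move: ne; rewrite add0n Hcnt.
have UV := proj2 (andP (valleys_cols 0 0 w)).
have [F [EP AF UP]] := @fold_inv n V k.-1 UV.
set P := foldl (bjs_step n) V (iota 1 k.-1) in EP.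
have [s Es] : exists s, bjs_crosses n w = bjs_step n P k ++ s.
  rewrite /bjs_crosses -/V.
  have -> : iota 1 n = iota 1 k.-1 ++ k :: iota k.+1 (n - k).
    have e : n = k.-1 + (n - k).+1 by lia.
    rewrite {1}e iotaD /=; have -> : 1 + k.-1 = k by lia.
    by [].
  by rewrite foldl_cat /=; apply: fold_ext.
set a := fun p : nat * nat => p.1 == k.
case Hv: (has a V).
- have HP : has a P by rewrite EP has_cat Hv.
  have Sq : bjs_step n P k = P by rewrite /bjs_step HP.
  have piE : bjs_perm n w k = (nth (0,0) V (find a V)).2.
    by rewrite /bjs_perm /= Es Sq find_cat_has // EP find_cat_has.
  set q := nth (0,0) V (find a V) in piE.
  have qV : q \in V by apply: mem_nth; rewrite -has_find.
  have qa : a q by apply: nth_find.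
  have [j [jn qe ne]] := VP q qV.
  rewrite /a qe /= in qa; move/eqP: qa => jk.
  have lj := low j jn.
  rewrite piE qe /=; split.
  + move=> E; move: ne; rewrite -jk /= in E *; by rewrite E eqxx.
  + lia.
- have nHP : ~~ has a P.
    rewrite EP has_cat Hv /=; apply/hasPn => p /(allP AF) /=; rewrite /a; lia.
  split.
  + move=> _.
    have [r0 Hr0 Hf] : exists2 r0, r0 \in iota 1 k & all (fun p => p.2 != r0) P.
      set S := filter (fun p : nat * nat => p.2 <= k) P.
      have U : uniq (map fst S).
        apply: subseq_uniq (map_subseq fst (filter_subseq _ P)) _; by rewrite EP.
      have Sub : {subset map fst S <= iota 1 k.-1}.
        move=> x /mapP [p]; rewrite mem_filter => /andP [p2 pP] ->.
        rewrite mem_iota; move: pP; rewrite EP mem_cat => /orP [/VP [j [jn pe _]]|pF].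
        * have := low j jn; move: p2; rewrite pe /=; lia.
        * move: (allP AF p pF); lia.
      have sz : size S <= k.-1.
        by have := uniq_leq_size U Sub; rewrite size_map size_iota.
      case: (boolP (all (fun r => r \in map snd S) (iota 1 k))) => Hall.
      * have := uniq_leq_size (iota_uniq 1 k) (fun x Hx => allP Hall x Hx).
        rewrite size_iota size_map; lia.
      * move/allPn: Hall => [r0 Hr Hn]; exists r0 => //.
        apply/allP => p Hp; apply/eqP => E; move/negP: Hn; apply.
        apply/mapP; exists p => //; rewrite mem_filter Hp andbT E.
        by move: Hr; rewrite mem_iota; lia.
    have [x [Sq xk]] : exists x, bjs_step n P k = rcons P (k, x) /\ x <= k.
      rewrite /bjs_step (negbTE nHP).
      have -> : iota 1 n = iota 1 k ++ iota k.+1 (n - k).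
        by rewrite -{1}(subnKC kn) iotaD add1n.
      rewrite filter_cat.
      case E: [seq r <- iota 1 k | all (fun p => p.2 != r) P] => [|x t].
      * have : r0 \in [seq r <- iota 1 k | all (fun p => p.2 != r) P] by rewrite mem_filter Hf.
        by rewrite E.
      * exists x; split => //.
        have : x \in [seq r <- iota 1 k | all (fun p => p.2 != r) P] by rewrite E inE eqxx.
        rewrite mem_filter mem_iota => /andP [_]; lia.
    have HQ : has a (rcons P (k, x)) by rewrite has_rcons /a /= eqxx.
    rewrite /bjs_perm /= Es Sq find_cat_has // -cats1 find_cat (negbTE nHP) /= /a /= eqxx addn0.
    by rewrite nth_cat ltnn subnn.
  + move=> _; apply/eqP; apply: contraFT Hv => ne.
    apply/hasP; exists (k, (nth 0 H k.-1).+1); last by rewrite /a eqxx.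
    apply/valleys_mem; exists k.-1; split.
    * rewrite -/H sH; lia.
    * by rewrite -/H add0n prednK.
    * by rewrite -/H prednK // add0n Hcnt.

Qed.
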